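(* For $n\ge 4$, the polynomials $W_n(t)=\sum_{\sigma\in\{-1,1\}^n} t^{\nu_W(\sigma)}$ satisfy \[ W_n(t)=W_{n-1}(t)+2W_{n-2}(t)+2(t-1)W_{n-3}(t). \]
   Context: Seating model. A circular table has $n\ge 1$ seats, with exactly one napkin between each pair of adjacent seats ($n$ napkins in total). ''Left'' and ''right'' are from the perspective of a seated diner. Diners $1,\dots,n$ arrive in this order and a maitre d' chooses a seat for each. A preference order is $\sigma=(\sigma_1,\dots,\sigma_n)\in\{-1,1\}^n$, where $\sigma_j=+1$ means diner $j$ prefers the napkin on their right and $\sigma_j=-1$ the napkin on their left. When diner $j$ is seated, they take their preferred adjacent napkin if it is still on the table; otherwise the other adjacent napkin if still on the table; otherwise they are napkinless. The maitre d' observes which napkin each seated diner takes. The ''previous diner'' means the most recently seated diner. Algorithm $W$ (trap setting). Seat diner 1; the primary direction $d\in\{\text{left},\text{right}\}$ is the side of the napkin diner 1 takes. All movement below is in direction $d$. (W1) If the two seats at distance 1 and 2 in direction $d$ from the previous diner's seat are both empty, go to W2; otherwise go to W4. (W2) If the previous diner took the napkin on their side $d$, seat the next diner two seats in direction $d$ from the previous diner and return to W1; otherwise go to W3. (W3) Seat the next diner one seat in direction $d$ from the previous diner and return to W1. (W4) Seat all remaining diners, one at a time in order of arrival, in the empty seats, in the order in which these seats are encountered moving in direction $d$ starting from diner 1's seat. $\nu_W(\sigma)$ is the number of napkinless diners when the $n$ diners with preference order $\sigma$ are seated at the circular table with $n$ seats by algorithm $W$, and $W_n(t)=\sum_{\sigma\in\{-1,1\}^n}t^{\nu_W(\sigma)}$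 (so e.g. $W_1(t)=2$, $W_2(t)=4$, $W_3(t)=4+4t$). *)

(* Defs.v *)
From mathcomp Require Import all_boot all_order all_algebra.
Set Implicit Arguments. Unset Strict Implicit. Unset Printing Implicit Defensive.
Import GRing.Theory.
Local Open Scope ring_scope.

(* Seats and napkins are numbered 0..n-1 (mod n).  Napkin i lies
   between seat i and seat i+1.  A diner at seat s has napkin s on the RIGHT
   and napkin s-1 (mod n) on the LEFT; moving "right" means s -> s+1 (mod n).
   A direction / napkin side / preference is encoded by a bool:
   true = right (+1), false = left (-1).  A napkin table is a seq bool of
   size n (true = napkin still on the table); occupancy is a seq bool of size
   n (true = seat occupied).  By rotational symmetry diner 1 sits at seat 0. *)

Definition stepd (n : nat) (d : bool) (s : nat) : nat :=
  if d then (s.+1 %% n)%N else ((s + n.-1) %% n)%N.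

Definition napk (n : nat) (side : bool) (s : nat) : nat :=
  if side then (s %% n)%N else ((s + n.-1) %% n)%N.

Definition seat_diner (n : nat) (nap : seq bool) (s : nat) (p : bool)
  : seq bool * option bool :=
  let a := napk n p s in
  if nth false nap a then (set_nth false nap a false, Some p)
  else let b := napk n (~~ p) s in
       if nth false nap b then (set_nth false nap b false, Some (~~ p))
       else (nap, None).

(* Step W4: seat remaining diners, in order, in the given seats. Accumulates
   the number of napkinless diners. *)
Fixpoint fill (n : nat) (nap : seq bool) (seats : seq nat) (ps : seq bool)
  (cnt : nat) : nat :=
  match ps, seats with
  | p :: ps', s :: seats' =>
      let r := seat_diner n nap s p in
      fill n r.1 seats' ps' (cnt + (r.2 == None))%N
  | _, _ => cnt
  end.

Definition empty_seats (n : nat) (d : bool) (occ : seq bool) : seq nat :=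
  [seq s <- [seq iter k (stepd n d) 0%N | k <- iota 1 n.-1] | ~~ nth true occ s].

(* Steps W1-W3 (then W4). [prev] is the previous diner's seat, [took] the side
   of the napkin the previous diner took. *)
Fixpoint trap (n : nat) (d : bool) (occ nap : seq bool) (prev : nat)
  (took : option bool) (ps : seq bool) (cnt : nat) : nat :=
  match ps with
  | [::] => cnt
  | p :: ps' =>
      let s1 := stepd n d prev in
      let s2 := stepd n d s1 in
      if ~~ nth true occ s1 && ~~ nth true occ s2 then
        let s := if took == Some d then s2 else s1 in
        let r := seat_diner n nap s p in
        trap n d (set_nth true occ s true) r.1 s r.2 ps' (cnt + (r.2 == None))%N
      else fill n nap (empty_seats n d occ) ps cnt
  end.

Definition nuW (n : nat) (sigma : seq bool) : nat :=
  match sigma with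
  | [::] => 0%N
  | p :: ps =>
      let r := seat_diner n (nseq n true) 0 p in
      let d := if r.2 is Some x then x else p in
      trap n d (set_nth false (nseq n false) 0 true) r.1 0 r.2 ps
        (r.2 == None)
  end.

Definition Wpoly (n : nat) : {poly int} :=
  \sum_(sigma : n.-tuple bool) 'X^(nuW n sigma).

Definition nu_list (n : nat) : seq nat :=
  [seq nuW n (val s) | s : n.-tuple bool].

(* Main.v *)
Require Import Defs.
From mathcomp Require Import all_boot all_order all_algebra.
From mathcomp Require Import zify ring.
Import GRing.Theory.


Lemma pairwise_filter_iota (P : pred nat) a k :
  (forall i, (a <= i)%N -> (i.+1 < a + k)%N -> ~~ (P i && P i.+1)) ->
  pairwise (fun i j => i.+1 < j)%N (filter P (iota a k)).
Proof.
elim: k a => [|k IH] a H //=.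
have IH' : pairwise (fun i j => i.+1 < j)%N (filter P (iota a.+1 k)).
  by apply: IH => i h1 h2; apply: H; lia.
case: ifP => Pa //=; rewrite IH' andbT.
apply/allP => j; rewrite mem_filter mem_iota => /andP[Pj /andP[h1 h2]].
case: (ltngtP a.+1 j) => // [|E]; first by lia.
subst j; have := H a (leqnn a); rewrite Pa Pj /= => /(_ _)/implyP; lia.
Qed.

Fixpoint g (m : nat) (c : bool) (qs : seq bool) : nat :=
  match qs with
  | [::] => 0%N
  | q :: qs' => if (2 <= m)%N then ((c && ~~ q) + g (m - (if c then 2 else 1)) q qs')%N else 0%N
  end.

Ltac alia := repeat match goal with
    | H : ?T |- _ => lazymatch T with
        | is_true _ => fail
        | ~ _ => fail
        | @eq ?U _ _ => tryif (unify U nat) then fail else clear H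
        | _ => lazymatch type of T with Prop => clear H | _ => fail end
        end
    end; lia.

Section Rel.
Variables (n : nat) (d : bool).
Hypothesis n0 : (0 < n)%N.

Definition pos i := iter i (stepd n d) 0%N.
Definition F i := if d then i else (n.-1 - i)%N.

Lemma modm1 a : (a < n)%N -> ((a + n.-1) %% n = if a == 0 then n.-1 else a.-1)%N.
Proof.
move=> an; case: eqP => [->|/eqP a0]; first by rewrite add0n modn_small //; lia.
have -> : (a + n.-1 = a.-1 + n)%N by lia.
by rewrite modnDr modn_small //; lia.
Qed.

Lemma posE i : (i < n)%N -> pos i = if d then i else ((n - i) %% n)%N.
Proof.
elim: i => [|i IH] Hi; first by case: d; rewrite // subn0 modnn.
rewrite /pos iterS -/(pos i) IH; last lia.
rewrite /stepd; case: d; first by rewrite modn_small.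
have [i0|i0] := posnP i.
  by subst i; rewrite subn0 modnn add0n subn1.
rewrite (modn_small (_ : n - i < n)%N); last lia.
rewrite modm1; last lia.
rewrite modn_small; last lia.
case: eqP => //; lia.
Qed.

Lemma pos_n : pos n = 0%N.
Proof.
have E : n = n.-1.+1 by lia.
rewrite {1}E /pos iterS -/(pos n.-1) posE; last lia.
rewrite /stepd; case: d; first by rewrite -E modnn.
rewrite (_ : n - n.-1 = 1)%N; last lia.
rewrite modm1; last by rewrite ltn_mod.
case: (ltngtP n 1) => [|h|->]; [lia| |by rewrite modnn].
by rewrite modn_small.
Qed.

Lemma pos_lt i : (i < n)%N -> (pos i < n)%N.
Proof. by move=> h; rewrite posE //; case: d => //; rewrite ltn_mod. Qed.

Lemma pos_inj i j : (i < n)%N -> (j < n)%N -> pos i = pos j -> i = j.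
Proof.
move=> hi hj; rewrite !posE //; case: d => //.
have [->|i0] := posnP i; have [->|j0] := posnP j; rewrite ?subn0 ?modnn //.
- rewrite modn_small; lia.
- rewrite modn_small; lia.
- rewrite !modn_small; lia.
Qed.

Lemma F_lt i : (i < n)%N -> (F i < n)%N.
Proof. rewrite /F; case: d => //; lia. Qed.

Lemma F_inj i j : (i < n)%N -> (j < n)%N -> F i = F j -> i = j.
Proof. rewrite /F; case: d => //; lia. Qed.

Lemma napk_pos y i : (0 < i < n)%N ->
  napk n y (pos i) = if y == d then F i else F i.-1.
Proof.
move=> /andP[i0 hi]; rewrite posE // /napk /F.
case: d; case: y => //=.
- by rewrite modn_small.
- rewrite modm1 //; case: eqP => //; lia.
- rewrite modn_mod modn_small; lia.
- rewrite (modn_small (_ : n - i < n)%N); last lia.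
  rewrite modm1; last lia.
  case: eqP => //; lia.
Qed.

Lemma napk_pos0 y : napk n y (pos 0) = if y == d then F 0 else F n.-1.
Proof.
rewrite /pos /= /napk /F; case: d; case: y => //=; rewrite ?mod0n ?add0n ?modn_small ?subn0 //; lia.
Qed.


Definition A (nap : seq bool) j := nth false nap (F j).

Lemma A_set nap k b j : (j < n)%N -> (k < n)%N ->
  A (set_nth false nap (F k) b) j = if j == k then b else A nap j.
Proof.
move=> hj hk; rewrite /A nth_set_nth /=.
case: eqP => [/F_inj -> //|]; first by rewrite eqxx.
by case: eqP => // ->.
Qed.

Lemma seat_rel nap i p : (0 < i < n)%N ->
  ((seat_diner n nap (pos i) p).2 == None) = ~~ A nap i && ~~ A nap i.-1 /\
  forall j, (j < n)%N -> j != i -> j != i.-1 -> A (seat_diner n nap (pos i) p).1 j = A nap j.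
Proof.
move=> hi; have hi' : (i.-1 < n)%N by lia.
have hi2 : (i < n)%N by lia.
rewrite /seat_diner !napk_pos //.
have -> : (~~ p == d) = ~~ (p == d) by case: p; case: d.
case: (p == d) => /=; rewrite -/(A nap i) -/(A nap i.-1).
- case: (A nap i) => /=.
    by split => // j hj /negbTE ji _; rewrite A_set // ji.
  case: (A nap i.-1) => /=.
    by split => // j hj _ /negbTE ji; rewrite A_set // ji.
  by split.
- case: (A nap i.-1) => /=.
    by rewrite andbF; split => // j hj _ /negbTE ji; rewrite A_set // ji.
  case: (A nap i) => /=.
    by split => // j hj /negbTE ji; rewrite A_set // ji.
  by split.
Qed.

Lemma fill_rel nap l ps cnt :
  (forall i, i \in l -> (0 < i < n)%N) -> pairwise (fun i j => i.+1 < j)%N l ->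
  (size l <= size ps)%N ->
  fill n nap (map pos l) ps cnt = (cnt + count (fun i => ~~ A nap i && ~~ A nap i.-1) l)%N.
Proof.
elim: l nap ps cnt => [|i l IH] nap [|p ps] cnt //=; first by rewrite addn0.
  by rewrite addn0.
move=> hl /andP[hall hpw] hs.
have hi : (0 < i < n)%N by apply: hl; rewrite inE eqxx.
have [e1 e2] := seat_rel nap i p hi.
rewrite IH //; last by move=> j hj; apply: hl; rewrite inE hj orbT.
rewrite e1 -addnA; congr (_ + (_ + _))%N.
apply: eq_in_count => j hj.
have hj1 : (0 < j < n)%N by apply: hl; rewrite inE hj orbT.
have hj2 : (i.+1 < j)%N by move/allP: hall => /(_ j hj).
rewrite e2; try lia.
rewrite e2; try lia.
Qed.


Definition O (occ : seq bool) i := nth true occ (pos i).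

Lemma O_set occ k i : (k < n)%N -> (i < n)%N ->
  O (set_nth true occ (pos k) true) i = if i == k then true else O occ i.
Proof.
move=> hk hi; rewrite /O nth_set_nth /=.
case: eqP => [/pos_inj -> //|]; first by rewrite eqxx.
by case: eqP => // ->.
Qed.

Lemma empty_seatsE occ :
  empty_seats n d occ = map pos (filter (fun i => ~~ O occ i) (iota 1 n.-1)).
Proof. by rewrite /empty_seats filter_map. Qed.

Lemma seat_pref2 nap i y k : (0 < i < n)%N -> k = (if y == d then i else i.-1) ->
  A nap k -> seat_diner n nap (pos i) y = (set_nth false nap (F k) false, Some y).
Proof.
move=> hi ->; rewrite /seat_diner napk_pos // /A; case: (y == d) => /= ->; by [].
Qed.

Lemma seat_pref nap i y : (0 < i < n)%N -> A nap (if y == d then i else i.-1) ->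
  seat_diner n nap (pos i) y =
    (set_nth false nap (F (if y == d then i else i.-1)) false, Some y).
Proof.
move=> hi; rewrite /seat_diner napk_pos // /A; case: (y == d) => /= ->; by [].
Qed.


Lemma trap_rel ps : forall p x occ nap cnt,
  (p < n)%N ->
  (forall i, (p < i < n)%N -> O occ i = false) ->
  O occ p -> O occ 0 ->
  (forall j, (p < j < n)%N -> A nap j) ->
  A nap p = ~~ (x == d) ->
  (forall i, (0 < i)%N -> (i < p)%N -> O occ i || O occ i.+1) ->
  size ps = (count (fun i => ~~ O occ i) (iota 1 p) + (n.-1 - p))%N ->
  trap n d occ nap (pos p) (Some x) ps cnt =
   (cnt + count (fun i => ~~ O occ i && ~~ A nap i && ~~ A nap i.-1) (iota 1 p)
      + g (n.-1 - p) (x == d) (map (fun y => y == d) ps))%N.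
Proof.
elim: ps => [|y ps IH] p x occ nap cnt hp H2 H3 H30 H4 H5 H6 H7.
  rewrite /= addn0.
  have : (count (fun i => ~~ O occ i && ~~ A nap i && ~~ A nap i.-1) (iota 1 p)
     <= count (fun i => ~~ O occ i) (iota 1 p))%N.
    by apply: sub_count => i /andP[/andP[]].
  move: H7 => /= H7; alia.
rewrite /=.
rewrite -[stepd n d (pos p)]/(pos p.+1) -[stepd n d (pos p.+1)]/(pos p.+2).
have -> : (Some x == Some d) = (x == d) by [].
rewrite -[nth true occ (pos p.+1)]/(O occ p.+1) -[nth true occ (pos p.+2)]/(O occ p.+2).
have [hm|hm] := leqP 2 (n.-1 - p).
  have e1 : O occ p.+1 = false by apply: H2; alia.
  have e2 : O occ p.+2 = false by apply: H2; alia.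
  rewrite e1 e2 /=.
  rewrite -[stepd n d (pos p)]/(pos p.+1) -[stepd n d (pos p.+1)]/(pos p.+2).
  have [s hs] : {s | s = if x == d then p.+2 else p.+1} by eexists.
  rewrite (_ : (if x == d then pos p.+2 else pos p.+1) = pos s); last by rewrite hs; case: (x == d).
  have [k hk] : {k | k = if y == d then s else s.-1} by eexists.
  have hs1 : (p < s <= p.+2)%N by rewrite hs; case: (x == d); alia.
  have hsc : (x == d) = (s == p.+2) by rewrite hs; case: (x == d); [rewrite eqxx | apply/esym/eqP; alia].
  have hk1 : (s.-1 <= k <= s)%N by rewrite hk; case: (y == d) => //; alia.
  have hkq : (y == d) = (k == s) by rewrite hk; case: (y == d); [rewrite eqxx | apply/esym/eqP; alia].
  have hAk : A nap k.
    case: (ltngtP p k) => [hpk|hpk|epk]; [apply: H4; alia | alia | rewrite -epk H5 hsc].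
    case: eqP => // es; move: hk; rewrite es -epk; case: (y == d); alia.
  rewrite (@seat_pref2 nap s y k) //; last alia.
  rewrite /= addn0; clear hs hk.
  have hsn : (s < n)%N by alia.
  have hkn : (k < n)%N by alia.
  have hOs : forall i, (i < n)%N -> O (set_nth true occ (pos s) true) i = if i == s then true else O occ i.
    by move=> i hi; rewrite O_set.
  have hAs : forall j, (j < n)%N -> A (set_nth false nap (F k) false) j = if j == k then false else A nap j.
    by move=> j hj; rewrite A_set.
  have Eiota : iota 1 s = iota 1 p ++ iota p.+1 (s - p).
    by rewrite {1}(_ : s = p + (s - p)); [rewrite iotaD add1n | alia].
  have EOi : {in iota 1 p, forall i, O (set_nth true occ (pos s) true) i = O occ i}.
    move=> i; rewrite mem_iota => hi; rewrite hOs; last alia.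
    by rewrite (_ : (i == s) = false) //; apply/eqP; alia.
  have Eold : count (fun i => ~~ O (set_nth true occ (pos s) true) i &&
         ~~ A (set_nth false nap (F k) false) i && ~~ A (set_nth false nap (F k) false) i.-1)
       (iota 1 p) = count (fun i => ~~ O occ i && ~~ A nap i && ~~ A nap i.-1) (iota 1 p).
    apply: eq_in_count => i hi; rewrite EOi //; move: hi; rewrite mem_iota => hi.
    have [eip|nip] := eqVneq i p; first by subst i; rewrite H3.
    rewrite !hAs; [|alia|alia].
    have e3 : (i == k) = false by apply/eqP; alia.
    have e4 : (i.-1 == k) = false by apply/eqP; alia.
    by rewrite e3 e4.
  have Eold2 : count (fun i => ~~ O (set_nth true occ (pos s) true) i) (iota 1 p) =
               count (fun i => ~~ O occ i) (iota 1 p).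
    by apply: eq_in_count => i hi; rewrite EOi.
  have hp1 : (p.+1 < n)%N by alia.
  have hp2 : (p.+2 < n)%N by alia.
  have ne12 : (p.+1 == p.+2) = false by apply/eqP; alia.
  have ne21 : (p.+2 == p.+1) = false by apply/eqP; alia.
  rewrite IH; last first.
  - rewrite Eiota count_cat Eold2; move: H7 => /= H7.
    have [es|es] : s = p.+1 \/ s = p.+2 by alia.
    + subst s; rewrite (_ : p.+1 - p = 1)%N /=; last alia.
      rewrite hOs // eqxx /=; alia.
    + subst s; rewrite (_ : p.+2 - p = 2)%N /=; last alia.
      rewrite !hOs // eqxx ne12 e1 /=; alia.
  - move=> i i0 his; rewrite !hOs; [|alia|alia].
    case: eqP => [_|ne1] /=; first by [].
    case: eqP => [_|ne2] /=; first by rewrite orbT.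
    have [eip|nip] := eqVneq i p; first by subst i; rewrite H3.
    apply: H6; alia.
  - rewrite hAs //.
    rewrite hkq; case: (k =P s) => [->|nks]; first by rewrite eqxx.
    rewrite (_ : (s == k) = false); [apply: H4; alia | apply/eqP; alia].
  - move=> j hj; rewrite hAs; last alia.
    case: eqP => [?|_]; [alia | apply: H4; alia].
  - rewrite hOs; last alia.
    case: eqP => [?|_]; [alia | exact: H30].
  - by rewrite hOs // eqxx.
  - move=> i hi; rewrite hOs; last alia.
    case: eqP => [?|_]; [alia | apply: H2; alia].
  - by [].
  rewrite Eiota count_cat Eold.
  have [es|es] : s = p.+1 \/ s = p.+2 by alia.
  + subst s; move: hsc; rewrite (_ : p.+1 - p = 1)%N /=; last alia.
    rewrite ne12 => ->; rewrite hOs // eqxx /=.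
    rewrite (_ : (n.-1 - p - 1 = n.-1 - p.+1)%N); alia.
  + subst s; move: hsc; rewrite (_ : p.+2 - p = 2)%N /=; last alia.
    rewrite eqxx => hsc; rewrite hsc !hOs // eqxx ne12 e1 /=.
    have hpk : (p == k) = false by apply/eqP; alia.
    rewrite !hAs; [|alia|alia].
    rewrite hpk H5 hsc /=.
    rewrite H4; last alia.
    rewrite hkq.
    have [ek|ek] : k = p.+1 \/ k = p.+2 by alia.
    * subst k; rewrite ?eqxx ?ne12 ?ne21 /=.
      rewrite (_ : (n.-1 - p - 2 = n.-1 - p.+2)%N); [alia|alia].
    * subst k; rewrite ?eqxx ?ne12 ?ne21 /=.
      rewrite (_ : (n.-1 - p - 2 = n.-1 - p.+2)%N); [alia|alia].
have hc : ~~ O occ p.+1 && ~~ O occ p.+2 = false.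
  have On : O occ n = O occ 0 by rewrite /O pos_n.
  have [e|e] : p.+1 = n \/ p.+2 = n by alia.
  - by rewrite e On H30.
  - by rewrite e On H30 andbF.
rewrite hc empty_seatsE.
have Eiota : iota 1 n.-1 = iota 1 p ++ iota p.+1 (n.-1 - p).
  by rewrite {1}(_ : n.-1 = p + (n.-1 - p)); [rewrite iotaD add1n | alia].
have E2 : count (fun i => ~~ O occ i) (iota p.+1 (n.-1 - p)) = (n.-1 - p)%N.
  rewrite (@eq_in_count _ _ predT) ?count_predT ?size_iota //.
  move=> i; rewrite mem_iota => hi; rewrite H2 //; alia.
rewrite fill_rel; first last.
- by rewrite size_filter Eiota count_cat E2 H7.
- apply: pairwise_filter_iota => i h1 h2.
  have [hip|hip|eip] := ltngtP i p.
  + by move: (H6 i h1 hip); case: (O occ i); case: (O occ i.+1).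
  + exfalso; alia.
  + by subst i; rewrite H3.
- by move=> i; rewrite mem_filter mem_iota => /andP[_ h]; alia.
rewrite count_filter Eiota count_cat addn0; congr (_ + _)%N.
rewrite (@eq_in_count _ _ pred0 (iota p.+1 _)) ?count_pred0 ?addn0.
  by apply: eq_count => i /=; rewrite andbC andbA.
move=> i; rewrite mem_iota => hi /=; rewrite H4 ?andbF //; alia.
Qed.

End Rel.


Lemma nuW_rel n p ps : (0 < n)%N -> size ps = n.-1 ->
  nuW n (p :: ps) = g n.-1 true (map (fun y => y == p) ps).
Proof.
move=> n0 hs.
have hF0 : napk n p 0 = F n p 0 by rewrite (@napk_pos0 n p n0 p) eqxx.
have hFlt : (F n p 0 < n)%N by apply: F_lt.
rewrite /nuW /seat_diner hF0 nth_nseq hFlt /=.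
have := @trap_rel n p n0 ps 0 p (set_nth false (nseq n false) 0 true)
   (set_nth false (nseq n true) (F n p 0) false) 0%N n0.
rewrite /= !eqxx /= add0n subn0 => -> //.
- move=> i /andP[i0 hi]; rewrite /O.
  have hp := @pos_lt n p n0 i hi.
  have Eocc : set_nth false (nseq n false) 0 true = true :: nseq n.-1 false by case: (n) n0.
  rewrite Eocc; case E: (pos n p i) => [|k] /=.
    by have := @pos_inj n p n0 i 0 hi n0 E; lia.
  rewrite nth_nseq; case: ifP => //; lia.
- by rewrite /O; case: (n) n0.
- by rewrite /O; case: (n) n0.
- move=> j /andP[j0 hj]; rewrite /A nth_set_nth /=.
  case: eqP => [e|_]; last by rewrite nth_nseq F_lt.
  by have := @F_inj n p n0 j 0 hj n0 e; lia.
- by rewrite /A nth_set_nth /= eqxx.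
Qed.

Local Open Scope ring_scope.

Lemma sum_cons (k : nat) (G : seq bool -> {poly int}) :
  \sum_(t : k.+1.-tuple bool) G t = \sum_(b : bool) \sum_(t : k.-tuple bool) G (b :: t).
Proof.
rewrite pair_big /=.
rewrite (reindex (fun bt : bool * k.-tuple bool => [tuple of bt.1 :: bt.2])) /=.
  by apply: eq_bigr => -[b t] _.
exists (fun t : k.+1.-tuple bool => (thead t, [tuple of behead t])) => [[b t]|t] _ /=.
  by rewrite theadE; congr pair; apply: val_inj.
by rewrite [in RHS](tuple_eta t); apply: val_inj.
Qed.

Definition Ss (m : nat) (c : bool) (k : nat) : {poly int} :=
  \sum_(t : k.-tuple bool) 'X^(g m c t).

Lemma g_small m c t : (m < 2)%N -> g m c t = 0%N.
Proof. by case: t => //= q qs; case: ifP => //; lia. Qed.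

Lemma Ss_small m c k : (m < 2)%N -> Ss m c k = (2 ^ k)%:R.
Proof.
move=> hm; rewrite /Ss (eq_bigr (fun _ => 1)); last by move=> t _; rewrite g_small.
by rewrite sumr_const card_tuple card_bool.
Qed.

Lemma Ss_step m c k : (2 <= m)%N ->
  Ss m c k.+1 = \sum_(b : bool) 'X^(c && ~~ b) * Ss (m - (if c then 2 else 1)) b k.
Proof.
move=> hm; rewrite /Ss (@sum_cons _ (fun s => 'X^(g m c s))); apply: eq_bigr => b _.
rewrite mulr_sumr; apply: eq_bigr => t _ /=.
by rewrite hm exprD.
Qed.

Lemma Ss_scale N : forall m c e, (m <= N)%N -> Ss m c (m + e) = (2 ^ e)%:R * Ss m c m.
Proof.
elim: N => [|N IH] m c e hmN.
  have -> : m = 0%N by lia.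
  by rewrite add0n !Ss_small // -natrM -expnD addn0.
have [hm|hm] := ltnP m 2.
  by rewrite !Ss_small // -natrM -expnD addnC.
have Em : m = (m.-1).+1 by lia.
rewrite (_ : (m + e)%N = (m.-1 + e).+1); last lia.
have E2 : Ss m c m = Ss m c m.-1.+1 by rewrite -Em.
rewrite E2 !Ss_step //; clear E2.
rewrite mulr_sumr; apply: eq_bigr => b _.
rewrite mulrCA; congr (_ * _).
case: c.
- rewrite (_ : (m.-1 + e)%N = ((m - 2) + (e.+1))%N); last lia.
  rewrite (_ : m.-1 = ((m - 2) + 1)%N); last lia.
  rewrite !IH; try lia.
  by rewrite mulrA -natrM -expnD addn1.
- rewrite (_ : m.-1 = (m - 1)%N); last lia.
  rewrite IH; try lia.
  by [].
Qed.

Definition aa m := Ss m true m.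
Definition bb m := Ss m false m.

Lemma sum_map_eq m b :
  \sum_(t : m.-tuple bool) 'X^(g m true (map (fun y => y == b) t)) = aa m.
Proof.
have inv : involutive (fun t : m.-tuple bool => [tuple of map (fun y => y == b) t]).
  move=> t; apply: val_inj => /=; rewrite -map_comp.
  by rewrite (eq_map (g := id)) ?map_id // => y /=; case: y; case: (b).
rewrite /aa /Ss (reindex_inj (inv_inj inv)) /=.
apply: eq_bigr => t _; congr (_ ^+ _); congr g.
by rewrite -map_comp (eq_map (g := id)) ?map_id // => y /=; case: y; case: (b).
Qed.

Lemma W_a m : Wpoly m.+1 = 2%:R * aa m.
Proof.
rewrite /Wpoly (@sum_cons m (fun s => 'X^(nuW m.+1 s))) big_bool.
have E : forall b, \sum_(t : m.-tuple bool) 'X^(nuW m.+1 (b :: t)) = aa m.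
  move=> b; rewrite -(sum_map_eq m b); apply: eq_bigr => t _.
  by rewrite nuW_rel // size_tuple.
by rewrite !E mulr_natl mulr2n.
Qed.

Lemma aa_rec m : aa m.+2 = 2%:R * aa m + 2%:R * 'X * bb m.
Proof.
rewrite /aa /bb Ss_step // big_bool /= (_ : (m.+2 - 2 = m)%N); last lia.
rewrite -(addn1 m) !(@Ss_scale m) // expr0 expr1 mul1r.
rewrite (_ : (2 ^ 1)%N = 2%N) //.
by rewrite mulrA [_ * 2%:R]mulrC.
Qed.

Lemma bb_rec m : bb m.+1 = aa m + bb m.
Proof.
case: m => [|m].
  by rewrite /aa /bb !Ss_small.
rewrite /aa /bb Ss_step // big_bool /= (_ : (m.+2 - 1 = m.+1)%N); last lia.
by rewrite !expr0 !mul1r.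
Qed.

Theorem proposition2 (n : nat) (hn : (4 <= n)%N) :
  Wpoly n = Wpoly (n - 1)%N + 2%:R * Wpoly (n - 2)%N + 2%:R * ('X - 1) * Wpoly (n - 3)%N.
Proof.
case: n hn => [|[|[|[|m]]]] // _.
rewrite (_ : (m.+4 - 1 = m.+3)%N); last lia.
rewrite (_ : (m.+4 - 2 = m.+2)%N); last lia.
rewrite (_ : (m.+4 - 3 = m.+1)%N); last lia.
rewrite !W_a !aa_rec bb_rec.
ring.
Qed.
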